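(* Assume the internal updates of the sensitive attribute are completely random: $P_{trans}(a,b)=1/|\mathrm{dom}(S)|$ for all $a,b\in\mathrm{dom}(S)$, so every sensitive value can update to every value, including itself. Let $t$ be a record whose versions $t'_1,\dots,t'_I$ appear in the releases published so far, with candidate sensitive sets $C_1,\dots,C_I$. Suppose a new release is published, in any way whatsoever, in which $t$ appears with candidate sensitive set $C_{I+1}$. For $1\le i\le I$, let $r(t'_i)$ be the disclosure risk of $t'_i$ computed from the feasible sub-SUG of $t$ with layers $1,\dots,I$, and let $r^{+}(t'_i)$ be the disclosure risk of $t'_i$ computed from the feasible sub-SUG of $t$ with layers $1,\dots,I+1$. Then $r^{+}(t'_i)=r(t'_i)$ for every $1\le i\le I$.
   Context: Data model. A microdata table is published repeatedly. Its records carry an identifier, quasi-identifier (QI) attributes and a sensitive attribute $S$ with a finite domain $\mathrm{dom}(S)$. Each published (generalized) table partitions its records, possibly including counterfeit records, into QI-groups. If a record $t$ appears in a release, its candidate sensitive set in that release is the set of sensitive values occurring in its QI-group; this set contains $t$'s actual sensitive value. The versions of $t$ are its records in the successive releases in which it appears, listed in order: $t'_1,\dots,t'_I$, with candidate sensitive sets $C_1,\dots,C_I$. Internal updates are governed by a publicly known transition probability $P_{trans}(a,b)\ge 0$ for $a,b\in\mathrm{dom}(S)$. Actual updates are feasible: $P_{trans}(t'_i[S],t'_{i+1}[S])>0$ for every $i$. Sensitive attribute update graph (SUG). The SUG of $t$ has, for each $i=1,\dots,I$, a layer $V_i=\{v_{i,s}: s\in C_i\}$ with one node per value of $C_i$.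 Each node has a weight $w(v_{i,s})>0$, its linking probability, and the weights in each layer sum to $1$; under the random-world assumption $w(v_{i,s})=1/|C_i|$. There is a directed edge $(v_{i,s},v_{i+1,s'})$ exactly when $P_{trans}(s,s')>0$, and its weight is $P_{trans}(s,s')$. Feasible sub-SUG. Obtain it from the SUG by repeatedly deleting a node, together with its incident edges, until no node can be deleted. A node is deleted if any of the following holds: it lies in $V_1$ and has no outgoing edge; it lies in $V_I$ and has no incoming edge; it lies in $V_i$ with $1<i<I$ and lacks an incoming edge or lacks an outgoing edge. When $I=1$, no node is deleted. Denote the remaining layers by $V'_i$. Disclosure risk. A feasible path is a path $p=(v'_{1,x_1},\dots,v'_{I,x_I})$ through the feasible sub-SUG with one node in each layer, where consecutive nodes are joined by edges. Its weight is $w(p)=w(v'_{I,x_I})\prod_{i=1}^{I-1} w(v'_{i,x_i})\,w(v'_{i,x_i},v'_{i+1,x_{i+1}})$. The disclosure risk of version $t'_i$ is the total weight of the feasible paths passing through the node of $V'_i$ that represents $t'_i[S]$, divided by the total weight of all feasible paths. *)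

(* Defs.v *)
From HB Require Import structures.
From mathcomp Require Import all_boot all_order all_algebra.
Set Implicit Arguments. Unset Strict Implicit. Unset Printing Implicit Defensive.
Import Order.TTheory GRing.Theory Num.Theory.
Local Open Scope ring_scope.

(* Layers are indexed 0 .. m-1 (paper: 1 .. I, with m = I).
   A layer configuration V : nat -> {set S} gives, for each layer i, the set
   of sensitive values s such that the node v_{i,s} is present.
   Edge (v_{i,s}, v_{i+1,s'}) exists iff 0 < P s s'. *)

Section SUG.
Variables (R : realFieldType) (S : finType).

Definition deletable (m : nat) (P : S -> S -> R) (V : nat -> {set S})
    (i : nat) (s : S) : bool :=
  let has_out := [exists b in V i.+1, 0 < P s b] in
  let has_in := [exists c in V i.-1, 0 < P c s] in
  if m == 1%N then false
  else if i == 0%N then ~~ has_out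
  else if i == m.-1 then ~~ has_in
  else ~~ has_in || ~~ has_out.

Definition prune_step (m : nat) (P : S -> S -> R) (V : nat -> {set S}) :
    nat -> {set S} :=
  fun i => [set s in V i | ~~ deletable m P V i s].

Definition sug_layers (m : nat) (C : nat -> {set S}) : nat -> {set S} :=
  fun i => if (i < m)%N then C i else set0.

(* Feasible sub-SUG: iterate deletion until nothing can be deleted; since
   each non-stationary step removes a node, m * #|S| + 1 iterations suffice
   (after stabilisation the step is the identity). *)
Definition feasible_layers (m : nat) (P : S -> S -> R) (C : nat -> {set S}) :
    nat -> {set S} :=
  iter (m * #|S|).+1 (prune_step m P) (sug_layers m C).

Definition feasible_path (n : nat) (P : S -> S -> R) (V : nat -> {set S})
    (x : {ffun 'I_n.+1 -> S}) : bool :=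
  [forall i : 'I_n.+1, x i \in V i] &&
  [forall i : 'I_n, 0 < P (x (widen_ord (leqnSn n) i)) (x (lift ord0 i))].

Definition path_weight (n : nat) (w : nat -> S -> R) (P : S -> S -> R)
    (x : {ffun 'I_n.+1 -> S}) : R :=
  w n (x ord_max) *
  \prod_(i < n) (w i (x (widen_ord (leqnSn n) i)) *
                 P (x (widen_ord (leqnSn n) i)) (x (lift ord0 i))).

Definition disclosure_risk (n : nat) (w : nat -> S -> R) (P : S -> S -> R)
    (V : nat -> {set S}) (i : 'I_n.+1) (a : S) : R :=
  (\sum_(x : {ffun 'I_n.+1 -> S} | feasible_path P V x && (x i == a)) path_weight w P x) /
  (\sum_(x : {ffun 'I_n.+1 -> S} | feasible_path P V x) path_weight w P x).

End SUG.

(* Main.v *)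
Require Import Defs.
From HB Require Import structures.
From mathcomp Require Import all_boot all_order all_algebra.
From mathcomp Require Import ring.
Import Order.TTheory GRing.Theory Num.Theory.
Local Open Scope ring_scope.

Section K.
Variables (R : realFieldType) (S : finType) (n : nat) (C : nat -> {set S})
  (a : nat -> S) (w : nat -> S -> R) (p : R).
Hypothesis hC : forall j, (j <= n)%N -> a j \in C j.
Hypothesis hsum : forall j, (j <= n)%N -> \sum_(s in C j) w j s = 1.
Hypothesis hp : 0 < p.
Let P := fun _ _ : S => p.

Lemma feas_eq k i : iter k (prune_step n.+1 P) (sug_layers n.+1 C) i = sug_layers n.+1 C i.
Proof.
elim: k i => [//|k IH] i /=.
rewrite /prune_step /deletable !IH /sug_layers.
apply/setP => s; rewrite inE.
case: ifP => hi; last by rewrite inE.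
case: (boolP (s \in C i)) => //= _.
have ne : forall j, (j < n.+1)%N -> [exists c in C j, 0 < p].
  move=> j hj; apply/existsP; exists (a j); rewrite hp andbT; apply: hC; by [].
case: eqP => // hn1.
have hn : (0 < n)%N by case: n hn1 hi {IH} => // [] [].
rewrite /P.
case: eqP => [->|i0].
  by rewrite ltnS hn negbK (ne 1%N) // ltnS.
case: eqP => [->|im].
  by rewrite (leq_ltn_trans (leq_pred n)) // negbK ne // (leq_ltn_trans (leq_pred n)).
have h1 : (i.+1 < n.+1)%N.
  by rewrite ltnS ltn_neqAle -ltnS hi andbT; apply/eqP => e; apply: im; rewrite e.
rewrite h1 (leq_ltn_trans (leq_pred i) hi) ne // ?ne //.
exact: (leq_ltn_trans (leq_pred i) hi).
Qed.

Lemma fpath (x : {ffun 'I_n.+1 -> S}) :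
  feasible_path P (feasible_layers n.+1 P C) x = [forall j : 'I_n.+1, x j \in C j].
Proof.
rewrite /feasible_path /feasible_layers.
have -> : [forall i : 'I_n, 0 < P (x (widen_ord (leqnSn n) i)) (x (lift ord0 i))].
  by apply/forallP => ?; rewrite /P hp.
rewrite andbT; apply: eq_forallb => j; rewrite feas_eq /sug_layers ltn_ord //.
Qed.

Lemma pweight (x : {ffun 'I_n.+1 -> S}) :
  path_weight w P x = p ^+ n * \prod_(j < n.+1) w j (x j).
Proof.
rewrite /path_weight big_split /= prodr_const card_ord big_ord_recr /=.
ring.
Qed.

Lemma sum_family (Q : 'I_n.+1 -> pred S) :
  \sum_(x : {ffun 'I_n.+1 -> S} | [forall j, Q j (x j)]) path_weight w P x =
  p ^+ n * \prod_(j < n.+1) \sum_(s | Q j s) w j s.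
Proof.
rewrite bigA_distr_big_dep mulr_sumr /=.
apply: eq_big => x; first by apply/forallP/familyP.
by rewrite pweight.
Qed.

Lemma risk_eq (i : 'I_n.+1) :
  disclosure_risk w P (feasible_layers n.+1 P C) i (a i) = w i (a i).
Proof.
rewrite /disclosure_risk.
rewrite (eq_bigl (fun x : {ffun 'I_n.+1 -> S} =>
   [forall j : 'I_n.+1, (x j \in C j) && ((j == i) ==> (x j == a i))])); last first.
  move=> x; rewrite fpath; apply/andP/forallP.
    move=> [/forallP H /eqP e] j; rewrite H /=; apply/implyP => /eqP ->; exact/eqP.
  move=> H; split; first by apply/forallP => j; case/andP: (H j).
  by case/andP: (H i) => _; rewrite eqxx.
rewrite [X in _ / X](eq_bigl (fun x : {ffun 'I_n.+1 -> S} =>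
   [forall j : 'I_n.+1, x j \in C j])); last by move=> x; rewrite fpath.
rewrite (sum_family (fun j s => (s \in C j) && ((j == i) ==> (s == a i)))).
rewrite (sum_family (fun j s => s \in C j)).
have hden : \prod_(j < n.+1 | j != i) \sum_(s in C j) w j s = 1.
  by apply: big1 => j _; rewrite hsum // -ltnS.
have hnum : \prod_(j < n.+1 | j != i)
    \sum_(s in C j | (j == i) ==> (s == a i)) w j s = 1.
  apply: big1 => j /negbTE ji.
  rewrite (eq_bigl (fun s => s \in C j)); last by move=> s; rewrite ji andbT.
  by rewrite hsum // -ltnS.
have hsi : \sum_(s in C i | (i == i) ==> (s == a i)) w i s = w i (a i).
  rewrite (big_pred1 (a i)) // => s; rewrite eqxx /=.
  by rewrite andb_idl // => /eqP ->; rewrite hC // -ltnS.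
have hsi' : \sum_(s in C i) w i s = 1 by rewrite hsum // -ltnS.
rewrite (bigD1 i) // [\prod_(j < n.+1) \sum_(s in C j) w j s](bigD1 i) //=.
rewrite hden hnum hsi hsi' !mulr1.
rewrite mulrC mulrA mulVf ?mul1r //; apply: expf_neq0; exact: lt0r_neq0.
Qed.
End K.

(* I = n.+1 existing versions (layers 0..n); new release = layer n.+1. *)
Theorem lemma1 (R : realFieldType) (S : finType) (n : nat)
    (C : nat -> {set S}) (a : nat -> S) (w : nat -> S -> R) :
  (forall i : nat, (i <= n.+1)%N -> a i \in C i) ->
  (forall i : nat, (i <= n.+1)%N -> forall s, s \in C i -> 0 < w i s) ->
  (forall i : nat, (i <= n.+1)%N -> \sum_(s in C i) w i s = 1) ->
  let P := fun _ _ : S => 1 / (#|S|%:R : R) in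
  forall i : 'I_n.+1,
    disclosure_risk w P (feasible_layers n.+2 P C)
      (widen_ord (leqnSn n.+1) i) (a i)
    = disclosure_risk w P (feasible_layers n.+1 P C) i (a i).
Proof.
move=> hC _ hs P i.
have hp : 0 < 1 / (#|S|%:R : R).
  rewrite div1r invr_gt0 ltr0n; apply/card_gt0P; exists (a 0%N); done.
have -> : a i = a (widen_ord (leqnSn n.+1) i) by [].
rewrite (@risk_eq R S n.+1 C a w _ hC hs hp).
rewrite (@risk_eq R S n C a w _ _ _ hp) // => j hj; [apply: hC | apply: hs]; exact: leqW.
Qed.
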